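(* Let $\mathcal{T}$ be an $l$-eligible microdata table and run the three-phase algorithm described in the context (arbitrary tie-breaking). Phase Three consists of at most $h(\ddot{R})$ rounds, where $\ddot{R}$ is the residue set at the end of Phase Two.
   Context: A microdata table $\mathcal{T}$ is a multiset of $n$ tuples with values on $d$ quasi-identifier (QI) attributes and one sensitive attribute (SA). For a multiset $Q$ and SA value $v$, $h(Q,v)$ is the number of tuples in $Q$ with SA value $v$, $h(Q)=\max_v h(Q,v)$, pillars of $Q$ are the $v$ with $h(Q,v)=h(Q)$; $Q$ is $l$-eligible if $|Q|\ge l\cdot h(Q)$. Let $Q_1,\dots,Q_s$ be the maximal classes of tuples of $\mathcal{T}$ with identical values on all QI attributes; the algorithm only moves tuples from these groups into a residue set $R$ (initially empty), and terminates as soon as $R$ becomes $l$-eligible. Terminology (w.r.t. current state): a group $Q$ is thin if $|Q|=l\cdot h(Q)$, fat if $|Q|\ge l\cdot h(Q)+1$; conflicting if some pillar of $Q$ is a pillar of $R$ (its conflicting pillars, set $C(Q)$); dead if thin and conflicting, alive otherwise; an SA value $v$ is alive if some alive group $Q$ has $h(Q,v)>0$. Phase One: for each $i$, while $Q_i$ is not $l$-eligible, move a tuple of a pillar of $Q_i$ to $R$. Phase Two: repeat: if no SA value is alive, go to Phase Three; else pick an alive SA value $v$ minimizing $h(R,v)$ and an alive group $Q$ with $h(Q,v)>0$; if $Q$ is fat move one tuple with SA value $v$ to $R$, if thin move one tuple of each pillar of $Q$ to $R$. Phase Three proceeds in rounds. Step 1: let $P$ be the set of pillars of $R$ and $S=\emptyset$;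 while $P\ne\emptyset$, pick a group $Q$ minimizing $|C(Q)\cap P|$, add it to $S$, and set $P\leftarrow P\cap C(Q)$; then for each $Q\in S$ move one tuple of each pillar of $Q$ to $R$. Step 2: for each group $Q$ that is now alive, repeat until $Q$ is dead: if $Q$ is fat, move to $R$ a tuple of $Q$ whose SA value is not a pillar of $R$; if $Q$ is thin and non-conflicting, move one tuple of each pillar of $Q$ to $R$. All ties are broken arbitrarily. *)

(* Defs.v *)
(* Model of the three-phase residue algorithm as a
   nondeterministic small-step transition system ("arbitrary tie-breaking"
   = every choice the algorithm is allowed to make is a possible step). *)
From mathcomp Require Import all_boot.
Set Implicit Arguments. Unset Strict Implicit. Unset Printing Implicit Defensive.

(* SA values are natural numbers; a multiset of tuples is represented, as far
   as SA values are concerned, by the sequence of their SA values. *)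

Definition hv (Q : seq nat) (v : nat) : nat := count_mem v Q.
Definition hmax (Q : seq nat) : nat := \max_(v <- Q) hv Q v.
Definition l_eligible (l : nat) (Q : seq nat) : bool := l * hmax Q <= size Q.
(* v is a pillar of Q : h(Q,v) = h(Q)  (for nonempty Q this forces v \in Q;
   we require v \in Q so that the empty multiset has no pillars) *)
Definition pillar (Q : seq nat) (v : nat) : bool := (v \in Q) && (hv Q v == hmax Q).
Definition thin (l : nat) (Q : seq nat) : bool := size Q == l * hmax Q.
Definition fat (l : nat) (Q : seq nat) : bool := l * hmax Q + 1 <= size Q.
Definition conflicting (R Q : seq nat) : bool :=
  has (fun v => pillar Q v && pillar R v) Q.
Definition conf_pillars (R Q : seq nat) : seq nat :=
  undup [seq v <- Q | pillar Q v && pillar R v].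
Definition dead (l : nat) (R Q : seq nat) : bool := thin l Q && conflicting R Q.
(* only nonempty groups are groups *)
Definition alive (l : nat) (R Q : seq nat) : bool := (Q != [::]) && ~~ dead l R Q.
Definition alive_val (l : nat) (R : seq nat) (gs : seq (seq nat)) (v : nat) : bool :=
  has (fun Q => alive l R Q && (v \in Q)) gs.

Definition move_gs (gs : seq (seq nat)) (i v : nat) : seq (seq nat) :=
  set_nth [::] gs i (rem v (nth [::] gs i)).

Inductive ctrl : Type :=
| Ph1 of nat                       (* Phase One, processing group i *)
| Ph2                              (* Phase Two, head of the loop *)
| Ph3                              (* Phase Three, start of a new round *)
| Sel of seq nat & seq nat         (* Step 1 selection loop, current P and S *)
| Step2Init                        (* Step 2, compute the groups now alive *)
| Step2 of seq nat                 (* Step 2, groups still to be processed *)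
| Moves of seq (nat * nat) & ctrl  (* pending single-tuple moves (group, value),
                                      then continue *)
| Halt.                            (* R became l-eligible *)

Record config := Config {
  groups : seq (seq nat);   (* current contents of Q_1..Q_s *)
  resid  : seq nat;         (* current residue set R *)
  ctl    : ctrl;
  rounds : nat;             (* number of Phase Three rounds started so far *)
  Rdd    : seq nat          (* residue set at the end of Phase Two *)
}.

Section Step.
Variable l : nat.
Local Notation G gs i := (nth [::] gs i).

Inductive step : config -> config -> Prop :=
| p1_next gs R i n Rd : i < size gs -> l_eligible l (G gs i) ->
    step (Config gs R (Ph1 i) n Rd) (Config gs R (Ph1 i.+1) n Rd)
| p1_move gs R i v n Rd : i < size gs -> ~~ l_eligible l (G gs i) ->
    pillar (G gs i) v ->
    step (Config gs R (Ph1 i) n Rd) (Config gs R (Moves [:: (i, v)] (Ph1 i)) n Rd)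
| p1_done gs R i n Rd : size gs <= i ->
    step (Config gs R (Ph1 i) n Rd) (Config gs R Ph2 n Rd)
| mv_nil gs R k n Rd :
    step (Config gs R (Moves [::] k) n Rd) (Config gs R k n Rd)
| mv_halt gs R i v mv k n Rd : l_eligible l (v :: R) ->
    step (Config gs R (Moves ((i, v) :: mv) k) n Rd)
         (Config (move_gs gs i v) (v :: R) Halt n Rd)
| mv_cont gs R i v mv k n Rd : ~~ l_eligible l (v :: R) ->
    step (Config gs R (Moves ((i, v) :: mv) k) n Rd)
         (Config (move_gs gs i v) (v :: R) (Moves mv k) n Rd)
| p2_done gs R n Rd : (forall v, ~~ alive_val l R gs v) ->
    step (Config gs R Ph2 n Rd) (Config gs R Ph3 n R)
| p2_fat gs R v i n Rd : alive_val l R gs v ->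
    (forall w, alive_val l R gs w -> hv R v <= hv R w) ->
    i < size gs -> alive l R (G gs i) -> v \in G gs i -> fat l (G gs i) ->
    step (Config gs R Ph2 n Rd) (Config gs R (Moves [:: (i, v)] Ph2) n Rd)
| p2_thin gs R v i vs n Rd : alive_val l R gs v ->
    (forall w, alive_val l R gs w -> hv R v <= hv R w) ->
    i < size gs -> alive l R (G gs i) -> v \in G gs i -> thin l (G gs i) ->
    uniq vs -> (forall w, (w \in vs) = pillar (G gs i) w) ->
    step (Config gs R Ph2 n Rd)
         (Config gs R (Moves [seq (i, w) | w <- vs] Ph2) n Rd)
| p3_round gs R n Rd :
    step (Config gs R Ph3 n Rd)
         (Config gs R (Sel (undup [seq v <- R | pillar R v]) [::]) n.+1 Rd)
| sel_pick gs R P S i n Rd : P != [::] -> i < size gs -> G gs i != [::] ->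
    (forall j, j < size gs -> G gs j != [::] ->
       size [seq v <- P | v \in conf_pillars R (G gs i)]
       <= size [seq v <- P | v \in conf_pillars R (G gs j)]) ->
    step (Config gs R (Sel P S) n Rd)
         (Config gs R (Sel [seq v <- P | v \in conf_pillars R (G gs i)]
                           (undup (i :: S))) n Rd)
| sel_move gs R S mv n Rd : uniq mv ->
    (forall i v, ((i, v) \in mv) = (i \in S) && pillar (G gs i) v) ->
    step (Config gs R (Sel [::] S) n Rd) (Config gs R (Moves mv Step2Init) n Rd)
| s2_init gs R ord n Rd : uniq ord ->
    (forall i, (i \in ord) = (i < size gs) && alive l R (G gs i)) ->
    step (Config gs R Step2Init n Rd) (Config gs R (Step2 ord) n Rd)
| s2_skip gs R i ord n Rd : ~~ alive l R (G gs i) ->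
    step (Config gs R (Step2 (i :: ord)) n Rd) (Config gs R (Step2 ord) n Rd)
| s2_fat gs R i v ord n Rd : alive l R (G gs i) -> fat l (G gs i) ->
    v \in G gs i -> ~~ pillar R v ->
    step (Config gs R (Step2 (i :: ord)) n Rd)
         (Config gs R (Moves [:: (i, v)] (Step2 (i :: ord))) n Rd)
| s2_thin gs R i vs ord n Rd : alive l R (G gs i) -> thin l (G gs i) ->
    ~~ conflicting R (G gs i) ->
    uniq vs -> (forall w, (w \in vs) = pillar (G gs i) w) ->
    step (Config gs R (Step2 (i :: ord)) n Rd)
         (Config gs R (Moves [seq (i, w) | w <- vs] (Step2 (i :: ord))) n Rd)
| s2_done gs R n Rd :
    step (Config gs R (Step2 [::]) n Rd) (Config gs R Ph3 n Rd).

Inductive reach (c0 : config) : config -> Prop :=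
| reach0 : reach c0 c0
| reachS c c' : reach c0 c -> step c c' -> reach c0 c'.
End Step.

(* the tuples of the table T with QI-vector q, as a multiset of SA values *)
Definition qi_class (d : nat) (T : seq (d.-tuple nat * nat)) (q : d.-tuple nat) : seq nat :=
  [seq t.2 | t <- T & t.1 == q].

Definition init_config (gs : seq (seq nat)) : config := Config gs [::] (Ph1 0) 0 [::].

(* Main.v *)
Require Import Defs.
From mathcomp Require Import all_boot zify.
Set Implicit Arguments. Unset Strict Implicit. Unset Printing Implicit Defensive.

Lemma count_le_hmax Q x : hv Q x <= hmax Q.
Proof.
case xQ: (x \in Q); first by rewrite /hmax (leq_bigmax_seq x).
by move/negbT/count_memPn: xQ; rewrite /hv => ->.
Qed.

Lemma hmax_le Q k : (forall x, hv Q x <= k) -> hmax Q <= k.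
Proof. by move=> H; apply/bigmax_leqP_seq => i _ _; apply: H. Qed.

Lemma hmax_gt0 Q : Q != [::] -> 0 < hmax Q.
Proof.
case: Q => // a Q _; apply: (leq_trans _ (count_le_hmax _ a)).
by rewrite /hv /= eqxx.
Qed.

Lemma hmax_nil : hmax [::] = 0.
Proof. by rewrite /hmax big_nil. Qed.

Lemma notpillar_lt R x : R != [::] -> ~~ pillar R x -> hv R x < hmax R.
Proof.
move=> Rn; rewrite /pillar negb_and => /orP[xR|].
  by move/count_memPn: xR; rewrite /hv => ->; apply: hmax_gt0.
by rewrite ltn_neqAle count_le_hmax andbT.
Qed.

Lemma pillar_hv Q x : pillar Q x -> hv Q x = hmax Q /\ x \in Q.
Proof. by case/andP=> xQ /eqP. Qed.

Lemma elig_ne l R : 0 < l -> ~~ l_eligible l R -> R != [::].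
Proof. by move=> l0; apply: contra => /eqP ->; rewrite /l_eligible hmax_nil muln0. Qed.

Lemma count_rem (x y : nat) s : count_mem x (rem y s) = count_mem x s - (x == y).
Proof.
elim: s => [|a s IH] /=; first by rewrite sub0n.
case: (eqVneq a y) => [->|ay] /=.
  by rewrite eq_sym; case: (eqVneq x y) => _ /=; rewrite ?addKn ?subn0.
rewrite IH; case: (eqVneq x y) => [xy|] /=; last by rewrite !subn0.
subst x; rewrite (negbTE (ay)) add0n add0n //.
Qed.

Fixpoint app (gs : seq (seq nat)) (R : seq nat) (mv : seq (nat * nat)) :
  seq (seq nat) * seq nat :=
  match mv with
  | [::] => (gs, R)
  | (i, v) :: mv' => app (move_gs gs i v) (v :: R) mv'
  end.

Lemma size_move gs i v : i < size gs -> size (move_gs gs i v) = size gs.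
Proof. by move=> H; rewrite /move_gs size_set_nth; apply/maxn_idPr. Qed.

Lemma nth_move gs i v j :
  nth [::] (move_gs gs i v) j =
  if j == i then rem v (nth [::] gs i) else nth [::] gs j.
Proof. by rewrite /move_gs nth_set_nth /=; case: eqP => // ->. Qed.

Lemma app_size gs R mv : (forall p, p \in mv -> p.1 < size gs) ->
  size (app gs R mv).1 = size gs.
Proof.
elim: mv gs R => [|[i v] mv IH] gs R //= H.
have Hi : i < size gs by apply: (H (i, v)); rewrite inE eqxx.
rewrite IH ?size_move // => p pm; rewrite ?size_move //; apply: H.
by rewrite inE pm orbT.
Qed.

Lemma app_countR gs R mv x :
  count_mem x (app gs R mv).2 = count_mem x R + count (fun p => p.2 == x) mv.
Proof.
elim: mv gs R => [|[i v] mv IH] gs R /=; first by rewrite addn0.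
by rewrite IH /= addnCA addnA; congr (_ + _); rewrite addnC eq_sym.
Qed.

Lemma app_countG gs R mv x j :
  count_mem x (nth [::] (app gs R mv).1 j) =
  count_mem x (nth [::] gs j) - count (pred1 (j, x)) mv.
Proof.
elim: mv gs R => [|[i v] mv IH] gs R /=; first by rewrite subn0.
rewrite IH nth_move subnDA; case: (eqVneq j i) => [->|ji].
  by rewrite count_rem xpair_eqE eqxx /= eq_sym.
by rewrite xpair_eqE eq_sym (negbTE ji) /= subn0.
Qed.

Lemma app_sizeR gs R mv : size (app gs R mv).2 = size R + size mv.
Proof.
elim: mv gs R => [|[i v] mv IH] gs R /=; first by rewrite addn0.
by rewrite IH /= addSnnS.
Qed.

Lemma app_nth_other gs R mv j : (forall p, p \in mv -> p.1 != j) ->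
  nth [::] (app gs R mv).1 j = nth [::] gs j.
Proof.
elim: mv gs R => [|[i v] mv IH] gs R //= H.
rewrite IH; last by move=> p pm; apply: H; rewrite inE pm orbT.
rewrite nth_move; have := H (i, v); rewrite inE eqxx /= eq_sym => /(_ isT).
by move/negbTE => ->.
Qed.

Definition Wg (gs : seq (seq nat)) := \sum_(j < size gs) hmax (nth [::] gs j).
Definition Sg (gs : seq (seq nat)) := \sum_(j < size gs) size (nth [::] gs j).
Definition Wc (gs : seq (seq nat)) (R : seq nat) := hmax R + Wg gs.
Definition Tc (gs : seq (seq nat)) (R : seq nat) := size R + Sg gs.

Lemma hmax_mono Q Q' : (forall x, hv Q' x <= hv Q x) -> hmax Q' <= hmax Q.
Proof. by move=> H; apply: hmax_le => x; apply: leq_trans (H x) (count_le_hmax _ _). Qed.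

Lemma app_Wg gs R mv : (forall p, p \in mv -> p.1 < size gs) ->
  Wg (app gs R mv).1 <= Wg gs.
Proof.
move=> H; rewrite /Wg app_size //; apply: leq_sum => j _.
by apply: hmax_mono => x; rewrite /hv app_countG leq_subr.
Qed.

Lemma sum_eq1 n i : i < n -> \sum_(j < n) (nat_of_ord j == i : nat) = 1.
Proof.
move=> Hi; rewrite (bigD1 (Ordinal Hi)) //= eqxx big1 // => j.
by rewrite -val_eqE /= => /negbTE ->.
Qed.

Lemma move_Sg gs i v : i < size gs -> Sg gs <= (Sg (move_gs gs i v)).+1.
Proof.
move=> Hi; rewrite /Sg size_move // -addn1 -(sum_eq1 Hi) -big_split /=.
apply: leq_sum => j _; rewrite nth_move; case: eqP => [->|] /=; last by rewrite addn0.
rewrite addn1; case vQ: (v \in nth [::] gs i).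
  by rewrite size_rem //; case: (nth [::] gs i) vQ.
by rewrite rem_id ?vQ.
Qed.

Lemma app_Tc gs R mv : (forall p, p \in mv -> p.1 < size gs) ->
  Tc gs R <= Tc (app gs R mv).1 (app gs R mv).2.
Proof.
elim: mv gs R => [|[i v] mv IH] gs R //= H.
have Hi : i < size gs by apply: (H (i, v)); rewrite inE eqxx.
apply: leq_trans (IH _ _ _); last first.
  by move=> p pm; rewrite size_move //; apply: H; rewrite inE pm orbT.
by rewrite /Tc /= addSnnS leq_add2l move_Sg.
Qed.

Lemma count2 (mv : seq (nat * nat)) n (x : nat) : uniq mv -> (forall p, p \in mv -> p.1 < n) ->
  count (fun p => p.2 == x) mv = \sum_(j < n) ((nat_of_ord j, x) \in mv : nat).
Proof.
elim: mv => [|[i v] mv IH] /= Hu H; first by rewrite big1.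
case/andP: Hu => nin Hu.
have Hi : i < n by apply: (H (i, v)); rewrite inE eqxx.
rewrite IH //; last by move=> p pm; apply: H; rewrite inE pm orbT.
have -> : \sum_(j < n) ((nat_of_ord j, x) \in (i, v) :: mv : nat) =
          \sum_(j < n) (((nat_of_ord j == i) && (x == v)) + ((nat_of_ord j, x) \in mv)).
  apply: eq_bigr => j _; rewrite inE xpair_eqE.
  case: (eqVneq (nat_of_ord j) i) => [ji|] /=; last by rewrite add0n.
  case: (eqVneq x v) => [xv|] /=; last by rewrite add0n.
  by move: nin; rewrite -ji -xv => /negbTE ->.
rewrite big_split /=; congr (_ + _).
case: (eqVneq x v) => [xv|xv]; last by rewrite big1 // => j _; rewrite andbF.
by transitivity 1 => //; rewrite -(sum_eq1 Hi); apply: eq_bigr => j _; rewrite andbT.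
Qed.

Lemma andb_le (a b : bool) : (a && b : nat) <= a.
Proof. by case: a; case: b. Qed.

Lemma step1 (gs : seq (seq nat)) (R : seq nat) (S : seq nat) (mv : seq (nat * nat)) :
  R != [::] -> uniq mv ->
  (forall i v, ((i, v) \in mv) = (i \in S) && pillar (nth [::] gs i) v) ->
  (forall i, i \in S -> i < size gs /\ nth [::] gs i != [::]) ->
  (forall p, pillar R p -> exists2 i, i \in S & ~~ pillar (nth [::] gs i) p) ->
  (Wc (app gs R mv).1 (app gs R mv).2).+1 <= Wc gs R.
Proof.
move=> Rn Hu Hmv HS HP.
have Hval : forall p, p \in mv -> p.1 < size gs.
  by case=> i v; rewrite Hmv => /andP[/HS[]].
set K := \sum_(j < size gs) (nat_of_ord j \in S : nat).
have Ha : Wg (app gs R mv).1 + K <= Wg gs.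
  rewrite /Wg app_size // /K -big_split /=; apply: leq_sum => j _.
  case jS: (nat_of_ord j \in S); last by rewrite addn0; apply: hmax_mono => x; rewrite /hv app_countG leq_subr.
  have [_ Gn] := HS _ jS; have h0 := hmax_gt0 Gn.
  rewrite addn1; apply: (@leq_ltn_trans (hmax (nth [::] gs j)).-1); last by rewrite prednK.
  apply: hmax_le => x; rewrite /hv app_countG (@count_uniq_mem _ mv (nat_of_ord j, x) Hu) Hmv jS /=.
  case pj: (pillar _ x); first by case/pillar_hv: pj; rewrite /hv => -> _; rewrite subn1.
  rewrite subn0 -ltnS prednK //; apply: notpillar_lt => //; by rewrite pj.
have Hb : (hmax (app gs R mv).2).+1 <= hmax R + K.
  have hR := hmax_gt0 Rn.
  suff : hmax (app gs R mv).2 <= (hmax R + K).-1 by lia.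
  apply: hmax_le => x; rewrite /hv app_countR (count2 x Hu Hval).
  have E : \sum_(j < size gs) ((nat_of_ord j, x) \in mv : nat) = \sum_(j < size gs) ((nat_of_ord j \in S) && pillar (nth [::] gs j) x : nat).
    by apply: eq_bigr => j _; rewrite Hmv.
  rewrite E; case pR: (pillar R x).
    have [i0 i0S npi] := HP _ pR; have [i0n _] := HS _ i0S.
    case/pillar_hv: pR; rewrite /hv => -> _.
    suff : (\sum_(j < size gs) ((nat_of_ord j \in S) && pillar (nth [::] gs j) x : nat)).+1 <= K by lia.
    rewrite /K [X in _ <= X](bigD1 (Ordinal i0n)) //= [X in X.+1 <= _](bigD1 (Ordinal i0n)) //= i0S (negbTE npi) /= add0n add1n ltnS.
    by apply: leq_sum => j _; apply: andb_le.
  have := notpillar_lt Rn (negbT pR); rewrite /hv => lt.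
  have : \sum_(j < size gs) ((nat_of_ord j \in S) && pillar (nth [::] gs j) x : nat) <= K.
    by apply: leq_sum => j _; apply: andb_le.
  lia.
rewrite /Wc; lia.
Qed.

Lemma nth_ne_size (gs : seq (seq nat)) i : nth [::] gs i != [::] -> i < size gs.
Proof. by apply: contraR; rewrite -leqNgt => H; rewrite nth_default. Qed.

Lemma thin_nil l : thin l [::].
Proof. by rewrite /thin hmax_nil muln0. Qed.

Lemma notalive_thin l R Q : ~~ alive l R Q -> thin l Q.
Proof.
rewrite /alive negb_and negbK; case/orP => [/eqP ->|]; first exact: thin_nil.
by rewrite negbK => /andP[].
Qed.

Lemma step2W gs R mv : (forall p, p \in mv -> p.1 < size gs) ->
  (forall x, count_mem x R + count (fun p => p.2 == x) mv <= hmax R) ->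
  Wc (app gs R mv).1 (app gs R mv).2 <= Wc gs R.
Proof.
move=> Hv Hc; rewrite /Wc leq_add ?app_Wg //.
by apply: hmax_le => x; rewrite /hv app_countR.
Qed.

Lemma thin_Sg l gs : (forall j, thin l (nth [::] gs j)) -> Sg gs = l * Wg gs.
Proof.
move=> H; rewrite /Sg /Wg big_distrr; apply: eq_bigr => j _.
by apply/eqP; apply: H.
Qed.

Definition ne (gs : seq (seq nat)) (R : seq nat) :=
  R != [::] \/ exists j, nth [::] gs j != [::].
Definition okR l (R : seq nat) := (R == [::]) || ~~ l_eligible l R.

Lemma ne_app gs R mv : ne gs R -> ne (app gs R mv).1 (app gs R mv).2.
Proof.
case: mv => [|p mv] // _; left; rewrite -size_eq0 app_sizeR /=.
by rewrite addnS.
Qed.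

Definition midI l gs R n (Rd : seq nat) k :=
  [/\ ~~ l_eligible l R, n <= hmax Rd, 0 < n &
      l * (Wc gs R + k) + size Rd <= l * hmax Rd + Tc gs R].

Fixpoint InvK l (k : ctrl) (gs : seq (seq nat)) (R : seq nat) (n : nat) (Rd : seq nat) {struct k} : Prop :=
  match k with
  | Ph1 _ => n = 0 /\ okR l R /\ ne gs R
  | Ph2 => n = 0 /\ okR l R /\ ne gs R
  | Ph3 => [/\ ~~ l_eligible l R, (forall j, thin l (nth [::] gs j)) &
              l * (Wc gs R + n) + size Rd <= l * hmax Rd + Tc gs R]
  | Sel P Ss => [/\ midI l gs R n Rd n.-1,
                  (forall i, i \in Ss -> i < size gs /\ nth [::] gs i != [::]) &
                  (forall p, pillar R p -> p \in P \/ exists2 i, i \in Ss & ~~ pillar (nth [::] gs i) p)]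
  | Step2Init => midI l gs R n Rd n
  | Step2 ord => midI l gs R n Rd n /\ (forall j, (j \in ord) || thin l (nth [::] gs j))
  | Moves mv k' => [/\ (forall p, p \in mv -> p.1 < size gs), n <= hmax Rd, okR l R &
                     (okR l (app gs R mv).2 -> InvK l k' (app gs R mv).1 (app gs R mv).2 n Rd)]
  | Halt => n <= hmax Rd
  end.

Definition Inv l c := InvK l (ctl c) (groups c) (resid c) (rounds c) (Rdd c).

Lemma Ph3_bound l gs R n Rd : 0 < l -> InvK l Ph3 gs R n Rd -> n < hmax Rd.
Proof.
move=> l0 [ne Ht H]; move: H; rewrite /Wc /Tc (thin_Sg Ht) !mulnDr => H.
move: ne; rewrite /l_eligible -ltnNge => ne.
have : l * n < l * hmax Rd by lia.
by rewrite ltn_mul2l l0.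
Qed.

Lemma Inv_bound l c : 0 < l -> Inv l c -> rounds c <= hmax (Rdd c).
Proof.
case: c => gs R k n Rd l0; rewrite /Inv /=.
case: k => [i|||P Ss||ord|mv k|] /=.
- by case=> ->.
- by case=> ->.
- by move=> H; apply: ltnW; apply: (Ph3_bound l0 H).
- by case=> [[]].
- by case.
- by case=> [[]].
- by case.
- by [].
Qed.

Lemma app_ne gs R mv : R != [::] -> (app gs R mv).2 != [::].
Proof. by rewrite -!size_eq0 app_sizeR -!lt0n => H; apply: leq_trans H (leq_addr _ _). Qed.

Lemma okR_ne l R : okR l R -> R != [::] -> ~~ l_eligible l R.
Proof. by rewrite /okR => /orP[/eqP ->|]. Qed.

Lemma notalive_all l R gs : (forall v, ~~ alive_val l R gs v) ->
  forall j, ~~ alive l R (nth [::] gs j).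
Proof.
move=> H j; case E: (nth [::] gs j) => [|a Q]; first by rewrite /alive eqxx.
apply/negP => al; move: (H a); rewrite /alive_val => /hasP; apply.
exists (nth [::] gs j); last by rewrite E al mem_head.
by apply: mem_nth; apply: nth_ne_size; rewrite E.
Qed.

Lemma mul_ineq l a b c d e f : a <= b -> c <= e ->
  l * b + d <= f + c -> l * a + d <= f + e.
Proof.
move=> ab ce H; have : l * a <= l * b by rewrite leq_mul2l ab orbT.
lia.
Qed.

Lemma mem_undup_cons (x y : nat) s :
  (y \in (if x \in s then undup s else x :: undup s)) = (y == x) || (y \in s).
Proof.
case: ifP => xs; last by rewrite inE mem_undup.
rewrite mem_undup; case: (eqVneq y x) => [->|] //.
Qed.

Lemma Inv_step l c c' : 0 < l -> step l c c' -> Inv l c -> Inv l c'.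
Proof.
move=> l0; case => {c c'}; rewrite /Inv /=.
- by [].
- move=> gs R i v n Rd Hi _ _ [n0 [ok nee]]; split => //; first by move=> p; rewrite inE => /eqP ->.
  + by rewrite n0.
  + by move=> okf; split => //; split => //; left.
- by [].
- by move=> gs R k n Rd [_ _ ok H]; apply: H.
- by move=> gs R i v mv k n Rd _ [].
- move=> gs R i v mv k n Rd nel [Hv Hn ok H].
  have Hi : i < size gs by apply: (Hv (i, v)); rewrite inE eqxx.
  split => //; try by rewrite /okR nel orbT.
  by move=> p pm; rewrite size_move //; apply: Hv; rewrite inE pm orbT.
- move=> gs R n Rd Hal [n0 [ok nee]]; subst n.
  have Hna := notalive_all Hal.
  have Ht : forall j, thin l (nth [::] gs j) by move=> j; apply: notalive_thin.
  have Rn : R != [::].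
    case: nee => // [[j Gj]]; have := Hna j; rewrite /alive Gj /= negbK.
    case/andP => _ /hasP [v _ /andP [_ pR]]; apply/eqP => E; subst R.
    by case/andP: pR.
  split => //; first exact: okR_ne.
  rewrite /Wc /Tc (thin_Sg Ht) !mulnDr; lia.
- move=> gs R v i n Rd _ _ Hi _ _ _ [n0 [ok nee]]; split => //; first by move=> p; rewrite inE => /eqP ->.
  + by rewrite n0.
  + by move=> okf; split => //; split => //; left.
- move=> gs R v i vs n Rd _ _ Hi _ _ _ _ _ [n0 [ok nee]]; split => //; first by move=> p /mapP[w _ ->].
  + by rewrite n0.
  + by move=> okf; split => //; split => //; apply: ne_app.
- move=> gs R n Rd H; have Hb := Ph3_bound l0 H; case: H => nel Ht Hi.
  split => //.
  move=> p pR; left; rewrite mem_undup mem_filter pR /=.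
  by case/pillar_hv: pR.
- move=> gs R P S i n Rd Pn Hi Gn Hmin [Hm HS HP]; split => //.
  + move=> i0; rewrite mem_undup_cons => /orP[/eqP ->|]; first by split.
    exact: HS.
  + move=> p pR; case: (HP p pR) => [pP|[j jS nj]]; last first.
      by right; exists j => //; rewrite mem_undup_cons jS orbT.
    case pc: (p \in conf_pillars R (nth [::] gs i)).
      by left; rewrite mem_filter pP pc.
    right; exists i; first by rewrite mem_undup_cons eqxx.
    apply/negP => pi; move/negbT: pc; rewrite mem_undup mem_filter pi pR /=.
    by case/pillar_hv: pi => _ ->.
- move=> gs R S mv n Rd Hu Hmv [[nel Hn n0 Hi] HS HP].
  have Hv : forall p, p \in mv -> p.1 < size gs.
    by move=> [i v]; rewrite Hmv => /andP[/HS[Hi' _] _].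
  have Rn := elig_ne l0 nel.
  split => //; first by rewrite /okR nel orbT.
  move=> okf; have nel' := okR_ne okf (app_ne gs mv Rn).
  have HP' : forall p, pillar R p -> exists2 i, i \in S & ~~ pillar (nth [::] gs i) p.
    by move=> p pR; case: (HP p pR).
  have W1 := step1 Rn Hu Hmv HS HP'.
  have T1 := app_Tc R Hv.
  rewrite /midI; split => //; apply: (mul_ineq _ T1 Hi); lia.
- move=> gs R ord n Rd Hu Hord Hm; split => // j.
  rewrite Hord; case al: (alive l R (nth [::] gs j)); last first.
    by rewrite (notalive_thin (negbT al)) orbT.
  by rewrite andbT nth_ne_size //; case/andP: al.
- move=> gs R i ord n Rd na [Hm Ho]; split => // j.
  have := Ho j; rewrite inE; case: (eqVneq j i) => [->|_] //= _.
  by rewrite (notalive_thin na) orbT.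
- move=> gs R i v ord n Rd al fa vi npR [[nel Hn n0 Hi] Ho].
  have Gi : nth [::] gs i != [::] by case/andP: al.
  have Hsz := nth_ne_size Gi.
  have Hv : forall p, p \in [:: (i, v)] -> p.1 < size gs by move=> p; rewrite inE => /eqP ->.
  have Rn := elig_ne l0 nel.
  split => //; first by rewrite /okR nel orbT.
  move=> okf; have nel' := okR_ne okf (app_ne gs [:: (i, v)] Rn).
  have W1 : Wc (app gs R [:: (i, v)]).1 (app gs R [:: (i, v)]).2 <= Wc gs R.
    apply: step2W => // x /=; rewrite addn0.
    case: (eqVneq v x) => [<-|_]; last by rewrite addn0 count_le_hmax.
    by rewrite addn1; apply: notpillar_lt.
  have T1 := app_Tc R Hv.
  split; first by rewrite /midI; split => //; apply: (mul_ineq _ T1 Hi); rewrite leq_add2r.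
  move=> j; case: (eqVneq j i) => [->|ji]; first by rewrite mem_head.
  by rewrite nth_move (negbTE ji); apply: Ho.
- move=> gs R i vs ord n Rd al th ncf Hu Hvs [[nel Hn n0 Hi] Ho].
  have Gi : nth [::] gs i != [::] by case/andP: al.
  have Hsz := nth_ne_size Gi.
  have Hv : forall p, p \in [seq (i, w) | w <- vs] -> p.1 < size gs by move=> p /mapP[w _ ->].
  have Rn := elig_ne l0 nel.
  split => //; first by rewrite /okR nel orbT.
  move=> okf; have nel' := okR_ne okf (app_ne gs [seq (i, w) | w <- vs] Rn).
  have W1 : Wc (app gs R [seq (i, w) | w <- vs]).1 (app gs R [seq (i, w) | w <- vs]).2 <= Wc gs R.
    apply: step2W => // x; rewrite count_map.
    have -> : count (preim (pair i) (fun p => p.2 == x)) vs = count_mem x vs by apply: eq_count.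
    rewrite (@count_uniq_mem _ vs x Hu); case xv: (x \in vs); last by rewrite /= addn0 count_le_hmax.
    rewrite /= addn1; apply: notpillar_lt => //; apply/negP => pR.
    move: Hvs (ncf) => /(_ x); rewrite xv => /esym pi; apply/negP/negPn/hasP.
    exists x; first by case/pillar_hv: pi.
    by rewrite pi pR.
  have T1 := app_Tc R Hv.
  split; first by rewrite /midI; split => //; apply: (mul_ineq _ T1 Hi); rewrite leq_add2r.
  move=> j; case: (eqVneq j i) => [->|ji]; first by rewrite mem_head.
  rewrite app_nth_other; first exact: Ho.
  by move=> p /mapP[w _ ->] /=; rewrite eq_sym.
- move=> gs R n Rd [[nel Hn n0 Hi] Ho]; split => //.
Qed.

Theorem lemma9 (d l : nat) (T : seq (d.-tuple nat * nat)) (qs : seq (d.-tuple nat))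
    (c : config) :
  0 < l -> T != [::] ->
  l_eligible l [seq t.2 | t <- T] ->
  uniq qs -> (forall q, (q \in qs) = (q \in [seq t.1 | t <- T])) ->
  reach l (init_config [seq qi_class T q | q <- qs]) c ->
  rounds c <= hmax (Rdd c).
Proof.
move=> l0 Tn _ _ Hq Hr; apply: (Inv_bound l0).
elim: Hr => [|c0 c' _ IH st]; last exact: (Inv_step l0 st IH).
rewrite /Inv /=; split => //; split => //; right.
case: T Tn Hq => [//|t T'] _ Hq.
have tq : t.1 \in qs by rewrite Hq /= inE eqxx.
exists (index t.1 qs).
by rewrite (nth_map t.1) ?index_mem // nth_index // /qi_class /= eqxx.
Qed.
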